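(* With $A_2[n]$ defined below, for $n=1,2,\dots$, $$A_2[n]=\frac{n+1}{128}\binom{3n+1}{n}\Bigl(\frac{168n^3+846n^2+1211n+510}{5}-3(n+1)(25n+34)\,F(1,-n;2n+2;-2)\Bigr),$$ where $F(a,b;c;z)$ is the Gauss hypergeometric function.
   Context: $A_0(z)$ is the unique function holomorphic near $z=0$ with $A_0(0)=0$ and $z(1+A_0(z))^3=A_0(z)$, and $$A_2(z)=A_0(z)\frac{(1+A_0(z))^6}{(1-2A_0(z))^9}\bigl(1+36A_0(z)+135A_0^2(z)+19A_0^3(z)\bigr).$$ The numbers $A_2[n]$ are defined by $A_2(z)=\sum_{n\ge1}A_2[n]z^n$. *)

(* Defs.v *)
(* Formal power series are handled through their
   coefficient sequences (nat -> R) and polynomial truncations. *)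
From HB Require Import structures.
From mathcomp Require Import all_boot all_order all_algebra.
Set Implicit Arguments. Unset Strict Implicit. Unset Printing Implicit Defensive.
Import Order.TTheory GRing.Theory Num.Theory.
Local Open Scope ring_scope.

Definition trunc_ps (R : nzRingType) (a : nat -> R) (N : nat) : {poly R} :=
  \poly_(i < N.+1) a i.

Definition eq_modX (R : nzRingType) (p q : {poly R}) (N : nat) : Prop :=
  forall i : nat, (i <= N)%N -> p`_i = q`_i.

(* a is the coefficient sequence of A_0: A_0(0) = 0 and z (1 + A_0)^3 = A_0
   as formal power series (equality checked modulo every z^(N+1)). *)
Definition is_A0 (R : nzRingType) (a : nat -> R) : Prop :=
  a 0%N = 0 /\
  forall N : nat,
    eq_modX ('X * (1 + trunc_ps a N) ^+ 3) (trunc_ps a N) N.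

(* b is the coefficient sequence of
   A_2 = A_0 (1+A_0)^6 (1-2A_0)^(-9) (1 + 36 A_0 + 135 A_0^2 + 19 A_0^3),
   i.e. (1 - 2A_0)^9 * A_2 = A_0 (1+A_0)^6 (1 + 36A_0 + 135A_0^2 + 19A_0^3)
   as formal power series ((1-2A_0)^9 is invertible since A_0(0) = 0). *)
Definition is_A2 (R : nzRingType) (a b : nat -> R) : Prop :=
  forall N : nat,
    let A := trunc_ps a N in
    eq_modX ((1 - 2%:R * A) ^+ 9 * trunc_ps b N)
            (A * (1 + A) ^+ 6 * (1 + 36%:R * A + 135%:R * A ^+ 2 + 19%:R * A ^+ 3))
            N.

Definition poch (R : nzRingType) (x : R) (k : nat) : R :=
  \prod_(i < k) (x + i%:R).

(* Gauss hypergeometric function F(a, -m; c; z) for a nonnegative integer m: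
   the series sum_k (a)_k (-m)_k / ((c)_k k!) z^k terminates, all terms with
   k > m vanishing since (-m)_k = 0. *)
Definition hyp2F1_negint (R : fieldType) (a : R) (m : nat) (c z : R) : R :=
  \sum_(k < m.+1) poch a k * poch (- (m%:R)) k / (poch c k * (k`!)%:R) * z ^+ k.

(* Main.v *)
Require Import Defs.
From HB Require Import structures.
From mathcomp Require Import all_boot all_order all_algebra.
From mathcomp Require Import zify ring.

Lemma binU j : (2*(j+1)*(2*j+3) * 'C(3*j+4, j.+1) = 3*(3*j+2)*(3*j+4) * 'C(3*j+1, j))%N.
Proof.
have h1 := mul_bin_diag (3*j+3).+1 j.
have h2 := mul_bin_down (3*j+2).+1 j.
have h3 := mul_bin_down (3*j+1).+1 j.
rewrite /= in h1 h2 h3.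
have e4 : (3*j+3).+1 = 3*j+4 by lia.
have e3 : (3*j+2).+1 = 3*j+3 by lia.
have e2 : (3*j+1).+1 = 3*j+2 by lia.
rewrite e4 in h1; rewrite e3 in h2; rewrite e2 in h3.
have f2 : (3*j+3 - j = 2*j+3)%N by lia.
have f3 : (3*j+2 - j = 2*j+2)%N by lia.
rewrite f2 in h2; rewrite f3 in h3.
move: h1 h2 h3.
set X := 'C(3*j+4, j.+1); set c3 := 'C(3*j+3, j); set c2 := 'C(3*j+2, j); set c0 := 'C(3*j+1, j).
move=> h1 h2 h3.
have -> : (2*(j+1)*(2*j+3) * X = 2*(2*j+3)*(j.+1 * X))%N by ring.
rewrite -h1.
have -> : (2 * (2 * j + 3) * ((3 * j + 4) * c3) = 2*(3*j+4) * ((2*j+3) * c3))%N by ring.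
rewrite -h2.
have -> : (2 * (3 * j + 4) * ((3 * j + 3) * c2) = 3*(3*j+4) * ((2*j+2) * c2))%N by ring.
rewrite -h3; ring.
Qed.

Definition GG (M j : nat) := (\sum_(k < j.+1) 2^k * 'C(M, j - k))%N.

Lemma GG0 M : GG M 0 = 1%N.
Proof. by rewrite /GG big_ord_recl big_ord0 /= bin0. Qed.

Lemma GGS M j : GG M j.+1 = ('C(M, j.+1) + 2 * GG M j)%N.
Proof.
rewrite /GG big_ord_recl subn0 expn0 mul1n big_distrr.
congr (_ + _)%N.
apply: eq_bigr => i _.
by rewrite lift0 subSS expnS -mulnA.
Qed.

Lemma GGP M j : GG M.+1 j.+1 = (GG M j.+1 + GG M j)%N.
Proof.
rewrite /GG big_ord_recr [X in _ = (X + _)%N]big_ord_recr /= !subnn !bin0 !muln1.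
rewrite addnAC -big_split /=; congr (_ + _)%N.
apply: eq_bigr => [[i hi]] _ /=.
have hi2 : (i <= j)%N by [].
by rewrite (subSn hi2) binS mulnDr.
Qed.

Definition SS n := GG (3 * n + 1) n.

Lemma Srec_aux m M : M = (3 * m.+2 + 1)%N ->
  (m.+3 * 4 * GG M.+3 m.+3 + 3 * 'C(M, m.+2) = m.+3 * 27 * GG M m.+2)%N.
Proof.
move=> hM.
rewrite !GGP !GGS.
have h3 := mul_bin_left M m.+2.
have h2 := mul_bin_left M m.+1.
have e3 : (M - m.+2 = 2 * m + 5)%N by rewrite hM; lia.
have e2 : (M - m.+1 = 2 * m + 6)%N by rewrite hM; lia.
rewrite e3 in h3; rewrite e2 in h2.
move: h2 h3; set c3 := 'C(M, m.+3); set c2 := 'C(M, m.+2); set c1 := 'C(M, m.+1); set x := GG M m.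
move=> h2 h3.
have -> : (m.+3 * 4 * (c3 + 2 * (c2 + 2 * (c1 + 2 * x)) + (c2 + 2 * (c1 + 2 * x)) +
   (c2 + 2 * (c1 + 2 * x) + (c1 + 2 * x)) + (c2 + 2 * (c1 + 2 * x) + (c1 + 2 * x) + (c1 + 2 * x + x)))
   + 3 * c2 = 4 * (m.+3 * c3) + (20 * m + 63) * c2 + 52 * (m + 3) * c1 + 108 * (m + 3) * x)%N.
  ring.
rewrite h3.
have -> : (4 * ((2 * m + 5) * c2) + (20 * m + 63) * c2 + 52 * (m + 3) * c1 + 108 * (m + 3) * x
  = (27 * m + 81) * c2 + 52 * (m + 3) * c1 + 108 * (m + 3) * x + m.+2 * c2)%N by ring.
rewrite h2.
have -> : (m.+3 * 27 * (c2 + 2 * (c1 + 2 * x)) = (27 * m + 81) * c2 + 54 * (m + 3) * c1 + 108 * (m + 3) * x)%N by ring.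
ring.
Qed.

Lemma Srec n : (n.+1 * 4 * SS n.+1 + 3 * 'C(3 * n + 1, n) = n.+1 * 27 * SS n)%N.
Proof.
case: n => [|[|m]].
- by rewrite /SS GGS !GG0.
- by rewrite /SS !GGS !GG0.
rewrite /SS.
have -> : (3 * m.+3 + 1 = (3 * m.+2 + 1).+3)%N by lia.
exact: Srec_aux.
Qed.
Import Order.TTheory GRing.Theory Num.Theory.
Local Open Scope ring_scope.
Section Hyp.
Variable R : numFieldType.

Lemma pochS (x : R) k : poch x k.+1 = poch x k * (x + k%:R).
Proof. by rewrite /poch big_ord_recr. Qed.

Lemma poch1 k : poch (1 : R) k = (k`!)%:R.
Proof.
elim: k => [|k IH]; first by rewrite /poch big_ord0.
by rewrite pochS IH factS natrM -natr1 addrC mulrC.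
Qed.

Lemma pochN n k : (k <= n)%N ->
  poch (- (n%:R : R)) k * ((n - k)`!)%:R = (-1) ^+ k * (n`!)%:R.
Proof.
elim: k => [|k IH] hk; first by rewrite /poch big_ord0 subn0 expr0 !mul1r.
have hk' : (k <= n)%N by apply: ltnW.
have e : (n - k = (n - k.+1).+1)%N by lia.
move: (IH hk'); rewrite e factS natrM => IH'.
rewrite pochS exprS -[in RHS]mulrA -IH'.
have -> : (- n%:R + k%:R : R) = - ((n - k.+1).+1)%:R.
  by rewrite -e natrB // opprB addrC.
ring.
Qed.

Lemma pochC n k : poch (2%:R * (n%:R : R) + 2%:R) k * (((2 * n + 1))`!)%:R
   = ((2 * n + 1 + k)`!)%:R.
Proof.
elim: k => [|k IH]; first by rewrite /poch big_ord0 mul1r addn0.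
have -> : ((2 * n + 1 + k.+1)`! = (2 * n + 1 + k).+1 * (2 * n + 1 + k)`!)%N.
  by rewrite addnS factS.
rewrite pochS mulrAC IH natrM [in LHS]mulrC; congr (_ * _).
by rewrite -!natrM -!natrD; congr (_ %:R); lia.
Qed.

Lemma fact_neq0 m : ((m`!)%:R : R) != 0.
Proof. by rewrite pnatr_eq0 -lt0n fact_gt0. Qed.

Lemma hypE n : hyp2F1_negint 1 n (2%:R * (n%:R : R) + 2%:R) (- 2%:R)
   * ('C(3 * n + 1, n))%:R = ((SS n)%:R : R).
Proof.
rewrite /hyp2F1_negint /SS /GG natr_sum mulr_suml.
apply: eq_bigr => [[k hk]] _ /=.
have hk' : (k <= n)%N by [].
have e1 : poch (- (n%:R : R)) k = (-1) ^+ k * (n`!)%:R / ((n - k)`!)%:R.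
  by rewrite -(pochN n k hk') mulfK // fact_neq0.
have e2 : poch (2%:R * (n%:R : R) + 2%:R) k = ((2 * n + 1 + k)`!)%:R / ((2 * n + 1)`!)%:R.
  by rewrite -(pochC n k) mulfK // fact_neq0.
have l1 : (n <= 3 * n + 1)%N by lia.
have l2 : (n - k <= 3 * n + 1)%N by lia.
have bC := bin_fact l1.
have bC' := bin_fact l2.
have f1 : (3 * n + 1 - n = 2 * n + 1)%N by lia.
have f2 : (3 * n + 1 - (n - k) = 2 * n + 1 + k)%N by lia.
have eC : (('C(3 * n + 1, n))%:R : R) = ((3 * n + 1)`!)%:R / ((n`!)%:R * ((2 * n + 1)`!)%:R).
  rewrite f1 in bC; rewrite -bC.
  by rewrite !natrM mulfK // mulf_neq0 // fact_neq0.
have eC' : (('C(3 * n + 1, n - k))%:R : R) = ((3 * n + 1)`!)%:R / (((n - k)`!)%:R * ((2 * n + 1 + k)`!)%:R).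
  rewrite f2 in bC'; rewrite -bC'.
  by rewrite !natrM mulfK // mulf_neq0 // fact_neq0.
have h2 : (2%:R : R) ^+ k = (-1) ^+ k * (- 2%:R) ^+ k by rewrite -exprMn mulN1r opprK.
rewrite e1 e2 eC natrM natrX eC' poch1 h2.
by field; rewrite !fact_neq0.
Qed.
End Hyp.

Section Gen.
Variable R : numFieldType.
Variable N : nat.
Implicit Types p q c l : {poly R}.

Definition Zm p := forall i, (i <= N)%N -> p`_i = 0.

Lemma Zm0 : Zm 0. Proof. by move=> i _; rewrite coef0. Qed.
Lemma ZmD {p q} : Zm p -> Zm q -> Zm (p + q).
Proof. by move=> hp hq i hi; rewrite coefD hp // hq // addr0. Qed.
Lemma ZmM c {p} : Zm p -> Zm (c * p).
Proof.
move=> hp i hi; rewrite coefM big1 // => j _; rewrite hp ?mulr0 //.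
exact: leq_trans (leq_subr _ _) hi.
Qed.
Lemma Zlc1 c1 {l1 p} : Zm l1 -> p = c1 * l1 -> Zm p.
Proof. by move=> h ->; apply: ZmM. Qed.
Lemma Zlc2 c1 c2 {l1 l2 p} : Zm l1 -> Zm l2 -> p = c1 * l1 + c2 * l2 -> Zm p.
Proof. by move=> h1 h2 ->; repeat apply: ZmD; apply: ZmM. Qed.
Lemma Zlc3 c1 c2 c3 {l1 l2 l3 p} : Zm l1 -> Zm l2 -> Zm l3 ->
  p = c1 * l1 + c2 * l2 + c3 * l3 -> Zm p.
Proof. by move=> h1 h2 h3 ->; repeat apply: ZmD; apply: ZmM. Qed.
Lemma Zlc4 c1 c2 c3 c4 {l1 l2 l3 l4 p} : Zm l1 -> Zm l2 -> Zm l3 -> Zm l4 ->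
  p = c1 * l1 + c2 * l2 + c3 * l3 + c4 * l4 -> Zm p.
Proof. by move=> h1 h2 h3 h4 ->; repeat apply: ZmD; apply: ZmM. Qed.

Lemma Zeq {p} q : Zm p -> p = q -> Zm q.
Proof. by move=> h <-. Qed.
Lemma ZmB {p q} : Zm p -> Zm q -> Zm (p - q).
Proof. by move=> hp hq; apply: (Zlc2 1 (-1) hp hq); rewrite mul1r mulN1r. Qed.

Definition th p := 'X * p^`().

Lemma coef_th p i : (th p)`_i = p`_i *+ i.
Proof. by rewrite /th coefXM; case: i => [|i] //=; rewrite coef_deriv. Qed.
Lemma Zth {p} : Zm p -> Zm (th p).
Proof. by move=> h i hi; rewrite coef_th h // mul0rn. Qed.
Lemma thD p q : th (p + q) = th p + th q.
Proof. by rewrite /th derivD mulrDr. Qed.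
Lemma thB p q : th (p - q) = th p - th q.
Proof. by rewrite /th derivB mulrBr. Qed.
Lemma thN p : th (- p) = - th p.
Proof. by rewrite /th derivN mulrN. Qed.
Lemma thM p q : th (p * q) = th p * q + p * th q.
Proof. rewrite /th derivM; ring. Qed.
Lemma thX p k : th (p ^+ k.+1) = p ^+ k * th p *+ k.+1.
Proof. rewrite /th deriv_exp /= -!mulrnAr; ring. Qed.
Lemma th1 : th 1 = 0.
Proof. by rewrite /th -polyC1 derivC mulr0. Qed.
Lemma thn n : th n%:R = 0.
Proof. by rewrite /th -polyC_natr derivC mulr0. Qed.
Lemma thXX : th 'X = 'X.
Proof. by rewrite /th derivX mulr1. Qed.

Lemma Zcancel {p q} : p`_0 = 1 -> Zm (p * q) -> Zm q.
Proof.
move=> p0 h i; elim/ltn_ind: i => i IH hi.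
have := h i hi; rewrite coefM big_ord_recl p0 mul1r subn0 big1 ?addr0 //.
move=> [j hj] _ /=; rewrite IH ?mulr0 //.
  by rewrite ltn_subrL /= (leq_ltn_trans (leq0n j) hj).
exact: leq_trans (leq_subr _ _) hi.
Qed.


Variables (A : {poly R}) (hA0 : A`_0 = 0)
  (hA : Zm ('X * (1 + A) ^+ 3 - A)).

Definition W := \sum_(i < N.+1) (2%:R * A) ^+ i.

Lemma AX : A = 'X * drop_poly 1 A.
Proof.
apply/polyP => i; rewrite coefXM; case: i => [|i] //=.
by rewrite coef_drop_poly addn1.
Qed.

Lemma hW : Zm ((1 - 2%:R * A) * W - 1).
Proof.
have -> : (1 - 2%:R * A) * W - 1 = - ((2%:R * A) ^+ N.+1 - 1) - 1 + 1 - 1.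
  by rewrite subrX1 /W; ring.
have -> : - ((2%:R * A) ^+ N.+1 - 1) - 1 + 1 - 1 = - 1 * (2%:R * A) ^+ N.+1 by ring.
apply: ZmM => i hi.
by rewrite AX mulrCA exprMn coefXnM ltnS hi.
Qed.

Lemma hdA : Zm (th A - A * (1 + A) * W).
Proof.
apply: (Zlc3 (- th A) (- W * (1 + A)) (W * ((1 + A) + 3%:R * th A))
   hW (Zth hA) hA).
rewrite !(thB, thM, thXX, thX, thD, th1, thn); ring.
Qed.

Lemma hdW : Zm (th W - 2%:R * A * (1 + A) * W ^+ 3).
Proof.
apply: (Zlc3 (- th W) W (2%:R * W ^+ 2) hW (Zth hW) hdA).
rewrite !(thB, thM, thXX, thX, thD, th1, thn); ring.
Qed.

Definition M (qq rr i j : nat) := (qq%:R * 1000%:R + rr%:R) * A ^+ i * W ^+ j.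
Lemma thMono (qq rr i j : nat) : th (M qq rr i j) =
  (qq%:R * 1000%:R + rr%:R) * (i%:R * A ^+ i.-1 * W ^+ j * th A + j%:R * A ^+ i * W ^+ j.-1 * th W).
Proof.
have hc : th (qq%:R * 1000%:R + rr%:R) = 0 by rewrite thD thM !thn; ring.
rewrite /M !thM hc.
case: i => [|i]; case: j => [|j]; rewrite ?expr0 ?th1 ?thX /=; ring.
Qed.
Definition Eu0 := (1 + A) ^+ 2 * W.
Definition Eu1 := (M 0 2 1 2 + M 0 2 1 3 + M 0 4 2 2 + M 0 6 2 3 + M 0 2 3 2 + M 0 6 3 3 + M 0 2 4 3).
Definition Eu2 := (M 0 2 1 3 + M 0 2 1 4 + M 0 10 2 3 + M 0 22 2 4 + M 0 12 2 5 + M 0 14 3 3 + M 0 54 3 4 + M 0 48 3 5 + M 0 6 4 3 + M 0 50 4 4 + M 0 72 4 5 + M 0 16 5 4 + M 0 48 5 5 + M 0 12 6 5).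
Definition Eu3 := (M 0 2 1 4 + M 0 2 1 5 + M 0 22 2 4 + M 0 58 2 5 + M 0 40 2 6 + M 0 62 3 4 + M 0 278 3 5 + M 0 360 3 6 + M 0 120 3 7 + M 0 66 4 4 + M 0 506 4 5 + M 1 40 4 6 + M 0 600 4 7 + M 0 24 5 4 + M 0 400 5 5 + M 1 360 5 6 + M 1 200 5 7 + M 0 116 6 5 + M 0 840 6 6 + M 1 200 6 7 + M 0 200 7 6 + M 0 600 7 7 + M 0 120 8 7).
Definition Eu4 := (M 0 2 1 5 + M 0 2 1 6 + M 0 46 2 5 + M 0 134 2 6 + M 0 100 2 7 + M 0 230 3 5 + M 1 142 3 6 + M 1 760 3 7 + M 0 840 3 8 + M 0 450 4 5 + M 3 530 4 6 + M 8 600 4 7 + M 7 560 4 8 + M 1 680 4 9 + M 0 384 5 5 + M 5 48 5 6 + M 18 800 5 7 + M 25 200 5 8 + M 10 80 5 9 + M 0 120 6 5 + M 3 416 6 6 + M 20 900 6 7 + M 42 0 6 8 + M 25 200 6 9 + M 0 888 7 6 + M 11 600 7 7 + M 37 800 7 8 + M 33 600 7 9 + M 2 560 8 7 + M 17 640 8 8 + M 25 200 8 9 + M 3 360 9 8 + M 10 80 9 9 + M 1 680 10 9).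
Definition Ev0 := (1 + A) ^+ 2 * W ^+ 2.
Definition Ev1 := (M 0 2 1 3 + M 0 4 1 4 + M 0 4 2 3 + M 0 12 2 4 + M 0 2 3 3 + M 0 12 3 4 + M 0 4 4 4).
Definition Ev2 := (M 0 2 1 4 + M 0 4 1 5 + M 0 10 2 4 + M 0 40 2 5 + M 0 32 2 6 + M 0 14 3 4 + M 0 96 3 5 + M 0 128 3 6 + M 0 6 4 4 + M 0 88 4 5 + M 0 192 4 6 + M 0 28 5 5 + M 0 128 5 6 + M 0 32 6 6).
Definition Ev3 := (M 0 2 1 5 + M 0 4 1 6 + M 0 22 2 5 + M 0 100 2 6 + M 0 104 2 7 + M 0 62 3 5 + M 0 464 3 6 + M 0 888 3 7 + M 0 384 3 8 + M 0 66 4 5 + M 0 832 4 6 + M 2 512 4 7 + M 1 920 4 8 + M 0 24 5 5 + M 0 652 5 6 + M 3 248 5 7 + M 3 840 5 8 + M 0 188 6 6 + M 1 992 6 7 + M 3 840 6 8 + M 0 472 7 7 + M 1 920 7 8 + M 0 384 8 8).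
Lemma dEu0 : Zm (th Eu0 - Eu1).
Proof.
apply: (Zlc2 (2%:R * W + 2%:R * A * W) (1%:R + 2%:R * A + A ^+ 2) hdA hdW).
rewrite /Eu0 /Eu1 /M !(thB, thM, thX, thD, thN, th1, thn); ring.
Qed.

Lemma dEu1 : Zm (th Eu1 - Eu2).
Proof.
apply: (Zlc2 (2%:R * W ^+ 2 + 2%:R * W ^+ 3 + 8%:R * A * W ^+ 2 + 12%:R * A * W ^+ 3 + 6%:R * A ^+ 2 * W ^+ 2 + 18%:R * A ^+ 2 * W ^+ 3 + 8%:R * A ^+ 3 * W ^+ 3) (4%:R * A * W + 6%:R * A * W ^+ 2 + 8%:R * A ^+ 2 * W + 18%:R * A ^+ 2 * W ^+ 2 + 4%:R * A ^+ 3 * W + 18%:R * A ^+ 3 * W ^+ 2 + 6%:R * A ^+ 4 * W ^+ 2) hdA hdW).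
rewrite /Eu1; rewrite !(thD, thB, thN, thMono); rewrite /Eu2 /M; ring.
Qed.

Lemma dEu2 : Zm (th Eu2 - Eu3).
Proof.
apply: (Zlc2 (2%:R * W ^+ 3 + 2%:R * W ^+ 4 + 20%:R * A * W ^+ 3 + 44%:R * A * W ^+ 4 + 24%:R * A * W ^+ 5 + 42%:R * A ^+ 2 * W ^+ 3 + 162%:R * A ^+ 2 * W ^+ 4 + 144%:R * A ^+ 2 * W ^+ 5 + 24%:R * A ^+ 3 * W ^+ 3 + 200%:R * A ^+ 3 * W ^+ 4 + 288%:R * A ^+ 3 * W ^+ 5 + 80%:R * A ^+ 4 * W ^+ 4 + 240%:R * A ^+ 4 * W ^+ 5 + 72%:R * A ^+ 5 * W ^+ 5) (6%:R * A * W ^+ 2 + 8%:R * A * W ^+ 3 + 30%:R * A ^+ 2 * W ^+ 2 + 88%:R * A ^+ 2 * W ^+ 3 + 60%:R * A ^+ 2 * W ^+ 4 + 42%:R * A ^+ 3 * W ^+ 2 + 216%:R * A ^+ 3 * W ^+ 3 + 240%:R * A ^+ 3 * W ^+ 4 + 18%:R * A ^+ 4 * W ^+ 2 + 200%:R * A ^+ 4 * W ^+ 3 + 360%:R * A ^+ 4 * W ^+ 4 + 64%:R * A ^+ 5 * W ^+ 3 + 240%:R * A ^+ 5 * W ^+ 4 + 60%:R * A ^+ 6 * W ^+ 4) hdA hdW).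
rewrite /Eu2; rewrite !(thD, thB, thN, thMono); rewrite /Eu3 /M; ring.
Qed.

Lemma dEu3 : Zm (th Eu3 - Eu4).
Proof.
apply: (Zlc2 (2%:R * W ^+ 4 + 2%:R * W ^+ 5 + 44%:R * A * W ^+ 4 + 116%:R * A * W ^+ 5 + 80%:R * A * W ^+ 6 + 186%:R * A ^+ 2 * W ^+ 4 + 834%:R * A ^+ 2 * W ^+ 5 + (1%:R * 1000%:R + 80%:R) * A ^+ 2 * W ^+ 6 + 360%:R * A ^+ 2 * W ^+ 7 + 264%:R * A ^+ 3 * W ^+ 4 + (2%:R * 1000%:R + 24%:R) * A ^+ 3 * W ^+ 5 + (4%:R * 1000%:R + 160%:R) * A ^+ 3 * W ^+ 6 + (2%:R * 1000%:R + 400%:R) * A ^+ 3 * W ^+ 7 + 120%:R * A ^+ 4 * W ^+ 4 + (2%:R * 1000%:R) * A ^+ 4 * W ^+ 5 + (6%:R * 1000%:R + 800%:R) * A ^+ 4 * W ^+ 6 + (6%:R * 1000%:R) * A ^+ 4 * W ^+ 7 + 696%:R * A ^+ 5 * W ^+ 5 + (5%:R * 1000%:R + 40%:R) * A ^+ 5 * W ^+ 6 + (7%:R * 1000%:R + 200%:R) * A ^+ 5 * W ^+ 7 + (1%:R * 1000%:R + 400%:R) * A ^+ 6 * W ^+ 6 + (4%:R * 1000%:R + 200%:R) * A ^+ 6 * W ^+ 7 + 960%:R * A ^+ 7 * W ^+ 7) (8%:R * A * W ^+ 3 + 10%:R * A * W ^+ 4 + 88%:R * A ^+ 2 * W ^+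 3 + 290%:R * A ^+ 2 * W ^+ 4 + 240%:R * A ^+ 2 * W ^+ 5 + 248%:R * A ^+ 3 * W ^+ 3 + (1%:R * 1000%:R + 390%:R) * A ^+ 3 * W ^+ 4 + (2%:R * 1000%:R + 160%:R) * A ^+ 3 * W ^+ 5 + 840%:R * A ^+ 3 * W ^+ 6 + 264%:R * A ^+ 4 * W ^+ 3 + (2%:R * 1000%:R + 530%:R) * A ^+ 4 * W ^+ 4 + (6%:R * 1000%:R + 240%:R) * A ^+ 4 * W ^+ 5 + (4%:R * 1000%:R + 200%:R) * A ^+ 4 * W ^+ 6 + 96%:R * A ^+ 5 * W ^+ 3 + (2%:R * 1000%:R) * A ^+ 5 * W ^+ 4 + (8%:R * 1000%:R + 160%:R) * A ^+ 5 * W ^+ 5 + (8%:R * 1000%:R + 400%:R) * A ^+ 5 * W ^+ 6 + 580%:R * A ^+ 6 * W ^+ 4 + (5%:R * 1000%:R + 40%:R) * A ^+ 6 * W ^+ 5 + (8%:R * 1000%:R + 400%:R) * A ^+ 6 * W ^+ 6 + (1%:R * 1000%:R + 200%:R) * A ^+ 7 * W ^+ 5 + (4%:R * 1000%:R + 200%:R) * A ^+ 7 * W ^+ 6 + 840%:R * A ^+ 8 * W ^+ 6) hdA hdW).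
rewrite /Eu3; rewrite !(thD, thB, thN, thMono); rewrite /Eu4 /M; ring.
Qed.

Lemma dEv0 : Zm (th Ev0 - Ev1).
Proof.
apply: (Zlc2 (2%:R * W ^+ 2 + 2%:R * A * W ^+ 2) (2%:R * W + 4%:R * A * W + 2%:R * A ^+ 2 * W) hdA hdW).
rewrite /Ev0 /Ev1 /M !(thB, thM, thX, thD, thN, th1, thn); ring.
Qed.

Lemma dEv1 : Zm (th Ev1 - Ev2).
Proof.
apply: (Zlc2 (2%:R * W ^+ 3 + 4%:R * W ^+ 4 + 8%:R * A * W ^+ 3 + 24%:R * A * W ^+ 4 + 6%:R * A ^+ 2 * W ^+ 3 + 36%:R * A ^+ 2 * W ^+ 4 + 16%:R * A ^+ 3 * W ^+ 4) (6%:R * A * W ^+ 2 + 16%:R * A * W ^+ 3 + 12%:R * A ^+ 2 * W ^+ 2 + 48%:R * A ^+ 2 * W ^+ 3 + 6%:R * A ^+ 3 * W ^+ 2 + 48%:R * A ^+ 3 * W ^+ 3 + 16%:R * A ^+ 4 * W ^+ 3) hdA hdW).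
rewrite /Ev1; rewrite !(thD, thB, thN, thMono); rewrite /Ev2 /M; ring.
Qed.

Lemma dEv2 : Zm (th Ev2 - Ev3).
Proof.
apply: (Zlc2 (2%:R * W ^+ 4 + 4%:R * W ^+ 5 + 20%:R * A * W ^+ 4 + 80%:R * A * W ^+ 5 + 64%:R * A * W ^+ 6 + 42%:R * A ^+ 2 * W ^+ 4 + 288%:R * A ^+ 2 * W ^+ 5 + 384%:R * A ^+ 2 * W ^+ 6 + 24%:R * A ^+ 3 * W ^+ 4 + 352%:R * A ^+ 3 * W ^+ 5 + 768%:R * A ^+ 3 * W ^+ 6 + 140%:R * A ^+ 4 * W ^+ 5 + 640%:R * A ^+ 4 * W ^+ 6 + 192%:R * A ^+ 5 * W ^+ 6) (8%:R * A * W ^+ 3 + 20%:R * A * W ^+ 4 + 40%:R * A ^+ 2 * W ^+ 3 + 200%:R * A ^+ 2 * W ^+ 4 + 192%:R * A ^+ 2 * W ^+ 5 + 56%:R * A ^+ 3 * W ^+ 3 + 480%:R * A ^+ 3 * W ^+ 4 + 768%:R * A ^+ 3 * W ^+ 5 + 24%:R * A ^+ 4 * W ^+ 3 + 440%:R * A ^+ 4 * W ^+ 4 + (1%:R * 1000%:R + 152%:R) * A ^+ 4 * W ^+ 5 + 140%:R * A ^+ 5 * W ^+ 4 + 768%:R * A ^+ 5 * W ^+ 5 + 192%:R * A ^+ 6 * W ^+ 5) hdA hdW).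
rewrite /Ev2; rewrite !(thD, thB, thN, thMono); rewrite /Ev3 /M; ring.
Qed.

Lemma c0AA d e : ((1 - 2%:R * A) ^+ d * (1 + A) ^+ e)`_0 = 1.
Proof.
rewrite -horner_coef0 !hornerE horner_coef0 hA0.
by rewrite mulr0 subr0 addr0 !expr1n mulr1.
Qed.
Lemma vanU : Zm (4%:R * Eu2 + 2%:R * Eu1 - 3%:R * 'X * (9%:R * Eu2 + 18%:R * Eu1 + 8%:R * Eu0)).
Proof.
apply: (Zcancel (c0AA 5 3)).
apply: (Zlc2 ((1 - 2%:R * A) ^+ 5 * (- 24%:R * W - 48%:R * A * W - 108%:R * A * W ^+ 2 - 162%:R * A * W ^+ 3 - 54%:R * A * W ^+ 4 - 24%:R * A ^+ 2 * W - 216%:R * A ^+ 2 * W ^+ 2 - 594%:R * A ^+ 2 * W ^+ 3 - 594%:R * A ^+ 2 * W ^+ 4 - 324%:R * A ^+ 2 * W ^+ 5 - 108%:R * A ^+ 3 * W ^+ 2 - 702%:R * A ^+ 3 * W ^+ 3 - (1%:R * 1000%:R + 458%:R) * A ^+ 3 * W ^+ 4 - (1%:R * 1000%:R + 296%:R) * A ^+ 3 * W ^+ 5 - 270%:R * A ^+ 4 * W ^+ 3 - (1%:R * 1000%:R + 350%:R) * A ^+ 4 * W ^+ 4 - (1%:R * 1000%:R + 944%:R) * A ^+ 4 * W ^+ 5 - 432%:R * A ^+ 5 * W ^+ 4 - (1%:R * 1000%:R + 296%:R) * A ^+ 5 * W ^+ 5 - 324%:R * A ^+ 6 * W ^+ 5))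 ((- 24%:R * A - 48%:R * A ^+ 2 - 24%:R * A ^+ 3) * (1 - 2%:R * A) ^+ 4 * (1) + (4%:R * A - 88%:R * A ^+ 2 - 176%:R * A ^+ 3 - 68%:R * A ^+ 4 + 20%:R * A ^+ 5 + 4%:R * A ^+ 6) * (1 - 2%:R * A) ^+ 3 * (1 + ((1 - 2%:R * A) * W) ^+ 1) + (12%:R * A - 74%:R * A ^+ 2 - 334%:R * A ^+ 3 - 302%:R * A ^+ 4 + 70%:R * A ^+ 5 + 152%:R * A ^+ 6 + 28%:R * A ^+ 7) * (1 - 2%:R * A) ^+ 2 * (1 + ((1 - 2%:R * A) * W) ^+ 1 + ((1 - 2%:R * A) * W) ^+ 2) + (8%:R * A + 58%:R * A ^+ 2 - 90%:R * A ^+ 3 - 338%:R * A ^+ 4 + 50%:R * A ^+ 5 + 576%:R * A ^+ 6 + 392%:R * A ^+ 7 + 64%:R * A ^+ 8) * (1 - 2%:R * A) ^+ 1 * (1 + ((1 - 2%:R * A) * W) ^+ 1 + ((1 - 2%:R * A) * W) ^+ 2 + ((1 - 2%:R * A) * W) ^+ 3) + (48%:R * A ^+ 2 + 12%:R * A ^+ 3 - 288%:R * A ^+ 4 - 264%:R * A ^+ 5 + 384%:R * A ^+ 6 + 684%:R * A ^+ 7 + 336%:R * A ^+ 8 + 48%:R * A ^+ 9) * (1 - 2%:R * A) ^+ 0 * (1 + ((1 - 2%:R * A) * W) ^+ 1 + ((1 - 2%:R * A) * W) ^+ 2 + ((1 - 2%:R * A) * W) ^+ 3 + ((1 - 2%:R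 * A) * W) ^+ 4)) hA hW).
rewrite /Eu0 /Eu1 /Eu2 /Eu3 /Eu4 /Ev0 /Ev1 /Ev2 /Ev3 /M. ring.
Qed.

Lemma vanV : Zm ((4%:R - 27%:R * 'X) * Ev1 - 27%:R * 'X * Ev0 + 3%:R * 'X * Eu0).
Proof.
apply: (Zcancel (c0AA 4 3)).
apply: (Zlc2 ((1 - 2%:R * A) ^+ 4 * (3%:R * W - 27%:R * W ^+ 2 + 6%:R * A * W - 54%:R * A * W ^+ 2 - 54%:R * A * W ^+ 3 - 108%:R * A * W ^+ 4 + 3%:R * A ^+ 2 * W - 27%:R * A ^+ 2 * W ^+ 2 - 108%:R * A ^+ 2 * W ^+ 3 - 324%:R * A ^+ 2 * W ^+ 4 - 54%:R * A ^+ 3 * W ^+ 3 - 324%:R * A ^+ 3 * W ^+ 4 - 108%:R * A ^+ 4 * W ^+ 4)) ((3%:R * A + 6%:R * A ^+ 2 + 3%:R * A ^+ 3) * (1 - 2%:R * A) ^+ 3 * (1) + (- 27%:R * A - 54%:R * A ^+ 2 - 27%:R * A ^+ 3) * (1 - 2%:R * A) ^+ 2 * (1 + ((1 - 2%:R * A) * W) ^+ 1) + (8%:R * A - 14%:R * A ^+ 2 - 28%:R * A ^+ 3 + 26%:R * A ^+ 4 + 40%:R * A ^+ 5 + 8%:R * A ^+ 6) * (1 - 2%:R * A) ^+ 1 * (1 + ((1 - 2%:R * A) * W) ^+ 1 + ((1 - 2%:R * A) * W) ^+ 2) + (16%:R * A - 12%:R * A ^+ 2 - 84%:R * A ^+ 3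 - 4%:R * A ^+ 4 + 132%:R * A ^+ 5 + 96%:R * A ^+ 6 + 16%:R * A ^+ 7) * (1 - 2%:R * A) ^+ 0 * (1 + ((1 - 2%:R * A) * W) ^+ 1 + ((1 - 2%:R * A) * W) ^+ 2 + ((1 - 2%:R * A) * W) ^+ 3)) hA hW).
rewrite /Eu0 /Eu1 /Eu2 /Eu3 /Eu4 /Ev0 /Ev1 /Ev2 /Ev3 /M. ring.
Qed.

Definition G0 := A * (1 + A) ^+ 6 * (1 + 36%:R * A + 135%:R * A ^+ 2 + 19%:R * A ^+ 3).
Lemma vanMain : Zm (640%:R * G0 * W ^+ 9 - (510%:R * Eu0 + (1%:R * 1000%:R + 721%:R) * Eu1 + (2%:R * 1000%:R + 57%:R) * Eu2 + (1%:R * 1000%:R + 14%:R) * Eu3 + 168%:R * Eu4 - (510%:R * Ev0 + (1%:R * 1000%:R + 395%:R) * Ev1 + (1%:R * 1000%:R + 260%:R) * Ev2 + 375%:R * Ev3))).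
Proof.
apply: (Zcancel (c0AA 9 0)).
apply: (Zlc1 ((- 510%:R - (1%:R * 1000%:R + 20%:R) * A - 510%:R * A ^+ 2) * (1 - 2%:R * A) ^+ 8 * (1) + (510%:R - (2%:R * 1000%:R + 422%:R) * A - (6%:R * 1000%:R + 374%:R) * A ^+ 2 - (3%:R * 1000%:R + 442%:R) * A ^+ 3) * (1 - 2%:R * A) ^+ 7 * (1 + ((1 - 2%:R * A) * W) ^+ 1) + (- (4%:R * 1000%:R + 766%:R) * A - (25%:R * 1000%:R + 316%:R) * A ^+ 2 - (36%:R * 1000%:R + 334%:R) * A ^+ 3 - (15%:R * 1000%:R + 784%:R) * A ^+ 4) * (1 - 2%:R * A) ^+ 6 * (1 + ((1 - 2%:R * A) * W) ^+ 1 + ((1 - 2%:R * A) * W) ^+ 2) + ((1%:R * 1000%:R + 958%:R) * A - (38%:R * 1000%:R + 222%:R) * A ^+ 2 - (139%:R * 1000%:R + 566%:R) * A ^+ 3 - (156%:R * 1000%:R + 634%:R) * A ^+ 4 - (57%:R * 1000%:R + 248%:R) * A ^+ 5) * (1 - 2%:R * A) ^+ 5 * (1 + ((1 - 2%:R * A) * W) ^+ 1 + ((1 - 2%:R * A) * W) ^+ 2 + ((1 - 2%:R * A) * W) ^+ 3) + ((3%:R * 1000%:R + 426%:R) * A - (32%:R * 1000%:R + 574%:R) * A ^+ 2 - (275%:R * 1000%:R + 58%:R) * A ^+ 3 - (601%:R * 1000%:R + 158%:R) * A ^+ 4 - (524%:R * 1000%:R + 568%:R) * A ^+ 5 - (162%:R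 * 1000%:R + 468%:R) * A ^+ 6) * (1 - 2%:R * A) ^+ 4 * (1 + ((1 - 2%:R * A) * W) ^+ 1 + ((1 - 2%:R * A) * W) ^+ 2 + ((1 - 2%:R * A) * W) ^+ 3 + ((1 - 2%:R * A) * W) ^+ 4) + ((1%:R * 1000%:R + 164%:R) * A + (14%:R * 1000%:R + 748%:R) * A ^+ 2 - (221%:R * 1000%:R + 616%:R) * A ^+ 3 - ((1%:R * 1000%:R + 93%:R) * 1000%:R + 680%:R) * A ^+ 4 - ((1%:R * 1000%:R + 821%:R) * 1000%:R + 324%:R) * A ^+ 5 - ((1%:R * 1000%:R + 314%:R) * 1000%:R + 828%:R) * A ^+ 6 - (351%:R * 1000%:R + 984%:R) * A ^+ 7) * (1 - 2%:R * A) ^+ 3 * (1 + ((1 - 2%:R * A) * W) ^+ 1 + ((1 - 2%:R * A) * W) ^+ 2 + ((1 - 2%:R * A) * W) ^+ 3 + ((1 - 2%:R * A) * W) ^+ 4 + ((1 - 2%:R * A) * W) ^+ 5) + ((22%:R * 1000%:R + 200%:R) * A ^+ 2 - (84%:R * 1000%:R + 360%:R) * A ^+ 3 - ((1%:R * 1000%:R + 111%:R) * 1000%:R + 200%:R) * A ^+ 4 - ((3%:R * 1000%:R + 157%:R) * 1000%:R + 200%:R) * A ^+ 5 - ((3%:R * 1000%:R + 981%:R) * 1000%:R) * A ^+ 6 - ((2%:R * 1000%:R + 380%:R) * 1000%:R + 200%:R) * A ^+ 7 - (551%:R * 1000%:R + 760%:R) * A ^+ 8) * (1 - 2%:R * A)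 ^+ 2 * (1 + ((1 - 2%:R * A) * W) ^+ 1 + ((1 - 2%:R * A) * W) ^+ 2 + ((1 - 2%:R * A) * W) ^+ 3 + ((1 - 2%:R * A) * W) ^+ 4 + ((1 - 2%:R * A) * W) ^+ 5 + ((1 - 2%:R * A) * W) ^+ 6) + ((2%:R * 1000%:R + 880%:R) * A ^+ 3 - (550%:R * 1000%:R + 80%:R) * A ^+ 4 - ((2%:R * 1000%:R + 793%:R) * 1000%:R + 600%:R) * A ^+ 5 - ((5%:R * 1000%:R + 616%:R) * 1000%:R) * A ^+ 6 - ((5%:R * 1000%:R + 630%:R) * 1000%:R + 400%:R) * A ^+ 7 - ((2%:R * 1000%:R + 819%:R) * 1000%:R + 520%:R) * A ^+ 8 - (564%:R * 1000%:R + 480%:R) * A ^+ 9) * (1 - 2%:R * A) ^+ 1 * (1 + ((1 - 2%:R * A) * W) ^+ 1 + ((1 - 2%:R * A) * W) ^+ 2 + ((1 - 2%:R * A) * W) ^+ 3 + ((1 - 2%:R * A) * W) ^+ 4 + ((1 - 2%:R * A) * W) ^+ 5 + ((1 - 2%:R * A) * W) ^+ 6 + ((1 - 2%:R * A) * W) ^+ 7) + (640%:R * A + (26%:R * 1000%:R + 880%:R) * A ^+ 2 + (234%:R * 1000%:R + 240%:R) * A ^+ 3 + (606%:R * 1000%:R + 720%:R) * A ^+ 4 + (145%:R * 1000%:R + 920%:R) * A ^+ 5 - ((1%:R * 1000%:R + 973%:R) * 1000%:R + 760%:R) * A ^+ 6 - ((3%:R * 1000%:R + 966%:R) * 1000%:R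 + 720%:R) * A ^+ 7 - ((3%:R * 1000%:R + 509%:R) * 1000%:R + 760%:R) * A ^+ 8 - ((1%:R * 1000%:R + 534%:R) * 1000%:R + 80%:R) * A ^+ 9 - (270%:R * 1000%:R + 80%:R) * A ^+ 10) * (1 - 2%:R * A) ^+ 0 * (1 + ((1 - 2%:R * A) * W) ^+ 1 + ((1 - 2%:R * A) * W) ^+ 2 + ((1 - 2%:R * A) * W) ^+ 3 + ((1 - 2%:R * A) * W) ^+ 4 + ((1 - 2%:R * A) * W) ^+ 5 + ((1 - 2%:R * A) * W) ^+ 6 + ((1 - 2%:R * A) * W) ^+ 7 + ((1 - 2%:R * A) * W) ^+ 8)) hW).
rewrite /G0; rewrite /Eu0 /Eu1 /Eu2 /Eu3 /Eu4 /Ev0 /Ev1 /Ev2 /Ev3 /M. ring.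
Qed.

Definition LU f := 4%:R * th (th f) + 2%:R * th f
  - 3%:R * 'X * (9%:R * th (th f) + 18%:R * th f + 8%:R * f).
Definition LV f g := (4%:R - 27%:R * 'X) * th f - 27%:R * 'X * f + 3%:R * 'X * g.

Lemma Zstep {p e e'} : Zm (p - e) -> Zm (th e - e') -> Zm (th p - e').
Proof. move=> h1 h2; apply: (Zlc2 1 1 (Zth h1) h2); rewrite thB; ring. Qed.

Definition chU1 := dEu0.
Definition chU2 := Zstep chU1 dEu1.
Definition chU3 := Zstep chU2 dEu2.
Definition chU4 := Zstep chU3 dEu3.
Definition chV1 := dEv0.
Definition chV2 := Zstep chV1 dEv1.
Definition chV3 := Zstep chV2 dEv2.

Lemma odeU_true : Zm (LU Eu0).
Proof.
apply: (Zlc3 (4%:R - 27%:R * 'X) (2%:R - 54%:R * 'X) 1 chU2 chU1 vanU).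
rewrite /LU; ring.
Qed.

Lemma odeV_true : Zm (LV Ev0 Eu0).
Proof.
apply: (Zlc2 (4%:R - 27%:R * 'X) 1 chV1 vanV).
rewrite /LV; ring.
Qed.

Lemma mainT : Zm (640%:R * G0 * W ^+ 9 - (510%:R * Eu0 + 1721%:R * th Eu0
  + 2057%:R * th (th Eu0) + 1014%:R * th (th (th Eu0)) + 168%:R * th (th (th (th Eu0)))
  - (510%:R * Ev0 + 1395%:R * th Ev0 + 1260%:R * th (th Ev0) + 375%:R * th (th (th Ev0))))).
Proof.
apply: (Zeq _ (ZmD vanMain (ZmD (ZmM (- 1721%:R) chU1) (ZmD (ZmM (- 2057%:R) chU2)
  (ZmD (ZmM (- 1014%:R) chU3) (ZmD (ZmM (- 168%:R) chU4) (ZmD (ZmM 1395%:R chV1)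
  (ZmD (ZmM 1260%:R chV2) (ZmM 375%:R chV3))))))))).
ring.
Qed.

Lemma W0 : W`_0 = 1.
Proof.
have := hW 0 (leq0n N); rewrite coefB coef0M coef1 /= => h.
have e := c0AA 1 0; rewrite expr1 expr0 mulr1 in e.
move: h; rewrite e mul1r => /eqP; rewrite subr_eq0 => /eqP //.
Qed.

Lemma Eu00 : Eu0`_0 = 1.
Proof.
rewrite /Eu0 coef0M W0 mulr1.
by have e := c0AA 0 2; rewrite expr0 mul1r in e.
Qed.

Lemma Ev00 : Ev0`_0 = 1.
Proof.
rewrite /Ev0 coef0M (expr2 W) coef0M W0 !mulr1.
by have e := c0AA 0 2; rewrite expr0 mul1r in e.
Qed.

End Gen.
Arguments th {R}.
Arguments LU {R}.
Arguments LV {R}.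
Arguments Zm {R}.
Arguments Zlc2 {R N} c1 c2 {l1 l2 p}.
Arguments ZmM {R N} c {p}.
Arguments ZmD {R N p q}.
Arguments Zeq {R N p} q.
Arguments ZmB {R N p q}.
Arguments Zth {R N p}.
Arguments thB {R} p q.


Section Coef.
Variable R : numFieldType.
Variable N : nat.
Implicit Types f g : {poly R}.
Definition uu n : R := ('C(3 * n + 1, n))%:R.
Definition vv n : R := (SS n)%:R.
Definition Uh : {poly R} := \poly_(i < N.+1) uu i.
Definition Vh : {poly R} := \poly_(i < N.+1) vv i.

Lemma coef_natM (c : nat) (p : {poly R}) i : (c%:R * p)`_i = c%:R * p`_i.
Proof. by rewrite mulr_natl coefMn mulr_natl. Qed.

Lemma coef_LU f i : (LU f)`_i = f`_i * (4 * i ^ 2 + 2 * i)%:R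
  - (if i is j.+1 then f`_j * (3 * (9 * j ^ 2 + 18 * j + 8))%:R else 0).
Proof.
rewrite /LU -[3%:R * 'X * _]mulrA !coefB !coefD !coef_natM coefXM !coefD !coef_natM !coef_th.
case: i => [|j] /=; ring.
Qed.

Lemma coef_LV f g i : (LV f g)`_i = f`_i * (4 * i)%:R
  - (if i is j.+1 then f`_j * (27 * j)%:R + f`_j * 27%:R - g`_j * 3%:R else 0).
Proof.
rewrite /LV mulrBl -[27%:R * 'X * th f]mulrA -[27%:R * 'X * f]mulrA -[3%:R * 'X * g]mulrA.
rewrite !(coefD, coefB, coefN, coef_natM, coefXM, coef_th).
case: i => [|j] /=; ring.
Qed.

Lemma LUB f g : LU (f - g) = LU f - LU g.
Proof. by rewrite /LU !thB; ring. Qed.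
Lemma LVB f g f' g' : LV (f - f') (g - g') = LV f g - LV f' g'.
Proof. by rewrite /LV !thB; ring. Qed.

Lemma uniqU (D : {poly R}) : Zm N (LU D) -> D`_0 = 0 -> Zm N D.
Proof.
move=> h h0 i; elim: i => [|j IH] hj //.
have := h j.+1 hj; rewrite coef_LU IH ?(ltnW hj) // mul0r subr0 => /eqP.
rewrite mulf_eq0 pnatr_eq0 orbC.
have -> : (4 * j.+1 ^ 2 + 2 * j.+1 == 0)%N = false by lia.
by move=> /eqP.
Qed.

Lemma uniqV (D G : {poly R}) : Zm N (LV D G) -> Zm N G -> D`_0 = 0 -> Zm N D.
Proof.
move=> h hG h0 i; elim: i => [|j IH] hj //.
have := h j.+1 hj; rewrite coef_LV IH ?(ltnW hj) // hG ?(ltnW hj) //.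
rewrite !mul0r subr0 addr0 subr0 => /eqP.
rewrite mulf_eq0 pnatr_eq0 orbC.
have -> : (4 * j.+1 == 0)%N = false by lia.
by move=> /eqP.
Qed.

Lemma LU_Uh : Zm N (LU Uh).
Proof.
move=> i hi; rewrite coef_LU; case: i hi => [|j] hj.
  by rewrite (_ : (4 * 0 ^ 2 + 2 * 0 = 0)%N) // mulr0 subr0.
rewrite !coef_poly ltnS hj ltnS (ltnW hj) /uu.
have e : ('C(3 * j.+1 + 1, j.+1) * (4 * j.+1 ^ 2 + 2 * j.+1)
   = 'C(3 * j + 1, j) * (3 * (9 * j ^ 2 + 18 * j + 8)))%N.
  have -> : (3 * j.+1 + 1 = 3 * j + 4)%N by lia.
  have hb := binU j.
  have -> : (4 * j.+1 ^ 2 + 2 * j.+1 = 2 * (j + 1) * (2 * j + 3))%N by ring.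
  have -> : (3 * (9 * j ^ 2 + 18 * j + 8) = 3 * (3 * j + 2) * (3 * j + 4))%N by ring.
  by rewrite mulnC hb mulnC.
by rewrite -!natrM e subrr.
Qed.

Lemma LV_VhUh : Zm N (LV Vh Uh).
Proof.
move=> i hi; rewrite coef_LV; case: i hi => [|j] hj.
  by rewrite muln0 mulr0 subr0.
rewrite !coef_poly ltnS hj ltnS (ltnW hj) /uu /vv.
have hR : (((j.+1 * 4 * SS j.+1 + 3 * 'C(3 * j + 1, j))%N)%:R : R)
   = ((j.+1 * 27 * SS j)%N)%:R by rewrite Srec.
rewrite natrD !natrM in hR.
rewrite (_ : _ - _ = ((j.+1)%:R * 4%:R * (SS j.+1)%:R + 3%:R * ('C(3 * j + 1, j))%:R)
    - (j.+1)%:R * 27%:R * (SS j)%:R); last by ring.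
by rewrite hR subrr.
Qed.

End Coef.


Theorem proposition7 (R : numFieldType) (a b : nat -> R) :
  is_A0 a -> is_A2 a b ->
  forall n : nat, (0 < n)%N ->
    b n = (n.+1)%:R / 128%:R * ('C(3 * n + 1, n))%:R *
          ((168%:R * n%:R ^+ 3 + 846%:R * n%:R ^+ 2 + 1211%:R * n%:R + 510%:R) / 5%:R
           - 3%:R * (n.+1)%:R * (25%:R * n%:R + 34%:R)
             * hyp2F1_negint 1 n (2%:R * n%:R + 2%:R) (- 2%:R)).
Proof.
move=> [ha0 hAs] hA2 n hn.
have hA0 : (trunc_ps a n)`_0 = 0 by rewrite coef_poly /= ha0.
have hA : Zm n ('X * (1 + trunc_ps a n) ^+ 3 - trunc_ps a n).
  by move=> i hi; rewrite coefB (hAs n i hi) subrr.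
have hB : Zm n ((1 - 2%:R * trunc_ps a n) ^+ 9 * trunc_ps b n - G0 R (trunc_ps a n)).
  move=> i hi; rewrite coefB; apply/eqP; rewrite subr_eq0; apply/eqP; exact: (hA2 n i hi).
have hM := mainT R n _ hA0 hA.
have hU := odeU_true R n _ hA0 hA.
have hV := odeV_true R n _ hA0 hA.
have hWA := hW R n _ hA0.
have hE0 := Eu00 R n _ hA0.
have hF0 := Ev00 R n _ hA0.
set A := trunc_ps a n in hA0 hA hB hM hU hV hWA hE0 hF0.
set Bt := trunc_ps b n in hB.
set Wn := W R n A in hWA hM.
have hBW : Zm n (Bt - G0 R A * Wn ^+ 9).
  apply: (Zlc2 (- Bt * (1 + ((1 - 2%:R * A) * Wn) ^+ 1 + ((1 - 2%:R * A) * Wn) ^+ 2 + ((1 - 2%:R * A) * Wn) ^+ 3 + ((1 - 2%:R * A) * Wn) ^+ 4 + ((1 - 2%:R * A) * Wn) ^+ 5 + ((1 - 2%:R * A) * Wn) ^+ 6 + ((1 - 2%:R * A) * Wn) ^+ 7 + ((1 - 2%:R * A) * Wn) ^+ 8)) (Wn ^+ 9) hWA hB); ring.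
have dU : Zm n (Eu0 R n A - Uh R n).
  apply: uniqU.
  - by apply: (Zeq _ (ZmB hU (LU_Uh R n))); rewrite LUB.
  - by rewrite coefB hE0 coef_poly /= /uu bin0 subrr.
have dV : Zm n (Ev0 R n A - Vh R n).
  apply: (uniqV R n (Ev0 R n A - Vh R n) (Eu0 R n A - Uh R n) _ dU).
  - by apply: (Zeq _ (ZmB hV (LV_VhUh R n))); rewrite LVB.
  - by rewrite coefB hF0 coef_poly /= /vv /SS GG0 subrr.
have dU1 : Zm n (th (Eu0 R n A) - th (Uh R n)) by rewrite -thB; exact: Zth dU.
have dU2 : Zm n (th (th (Eu0 R n A)) - th (th (Uh R n))) by rewrite -thB; exact: Zth dU1.
have dU3 : Zm n (th (th (th (Eu0 R n A))) - th (th (th (Uh R n)))) by rewrite -thB; exact: Zth dU2.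
have dU4 : Zm n (th (th (th (th (Eu0 R n A)))) - th (th (th (th (Uh R n))))) by rewrite -thB; exact: Zth dU3.
have dV1 : Zm n (th (Ev0 R n A) - th (Vh R n)) by rewrite -thB; exact: Zth dV.
have dV2 : Zm n (th (th (Ev0 R n A)) - th (th (Vh R n))) by rewrite -thB; exact: Zth dV1.
have dV3 : Zm n (th (th (th (Ev0 R n A))) - th (th (th (Vh R n)))) by rewrite -thB; exact: Zth dV2.
have fin : Zm n (640%:R * Bt - (510%:R * Uh R n + 1721%:R * th (Uh R n)
   + 2057%:R * th (th (Uh R n)) + 1014%:R * th (th (th (Uh R n)))
   + 168%:R * th (th (th (th (Uh R n))))
   - (510%:R * Vh R n + 1395%:R * th (Vh R n) + 1260%:R * th (th (Vh R n))
      + 375%:R * th (th (th (Vh R n)))))).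
  apply: (Zeq _ (ZmD (ZmM 640%:R hBW) (ZmD hM (ZmD (ZmM 510%:R dU) (ZmD (ZmM 1721%:R dU1)
    (ZmD (ZmM 2057%:R dU2) (ZmD (ZmM 1014%:R dU3) (ZmD (ZmM 168%:R dU4)
    (ZmD (ZmM (- 510%:R) dV) (ZmD (ZmM (- 1395%:R) dV1) (ZmD (ZmM (- 1260%:R) dV2)
    (ZmM (- 375%:R) dV3)))))))))))).
  ring.
have := fin n (leqnn n).
rewrite !(coefB, coefD, coef_natM, coef_th) /Bt /trunc_ps /Uh /Vh !coef_poly ltnSn /uu /vv.
move=> hc.
have hv := hypE R n.
rewrite -hv in hc.
apply: (@mulfI _ 640%:R); first by rewrite pnatr_eq0.
rewrite -[640%:R * b n]subr0 -[X in _ - X = _]hc.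
by field; rewrite ?pnatr_eq0.
Qed.
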